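(* Let $\phi=\frac{1+\sqrt5}{2}$ and let $\Gamma\subset SL_2(\mathbb R)$ be the group generated by $$\sigma_0=\begin{pmatrix}1&\phi\\0&1\end{pmatrix},\quad \sigma_1=\begin{pmatrix}\phi&\phi\\1&\phi\end{pmatrix},\quad \sigma_2=\begin{pmatrix}\phi&1\\\phi&\phi\end{pmatrix},\quad \sigma_3=\begin{pmatrix}1&0\\\phi&1\end{pmatrix}.$$ Let $S=\{\gamma\binom{1}{0}:\gamma\in\Gamma\}\subset\mathbb R^2$. There is a constant $C>0$ such that for every $0<\epsilon\le 1$ there exist two distinct points $s_1,s_2\in S$ with $\|s_1-s_2\|\le\epsilon$ and $s_1,s_2\in B(0,r)$, where $r\le C\epsilon^{-2}$.
   Context: $\|\cdot\|$ is the Euclidean norm on $\mathbb R^2$ and $B(0,r)$ is the closed ball of radius $r$ centered at the origin. $\Gamma$ acts on $\mathbb R^2$ by matrix multiplication on column vectors. *)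

(* Defs.v *)
From HB Require Import structures.
From mathcomp Require Import all_boot all_order all_algebra.
From mathcomp Require Import reals.
Set Implicit Arguments. Unset Strict Implicit. Unset Printing Implicit Defensive.
Import Order.TTheory GRing.Theory Num.Theory.
Local Open Scope ring_scope.

Section Defs.
Variable R : realType.

Definition phi : R := (1 + Num.sqrt 5) / 2.

Definition mx2 (a b c d : R) : 'M[R]_2 :=
  \matrix_(i < 2, j < 2)
    (if i == 0 :> nat then (if j == 0 :> nat then a else b)
     else (if j == 0 :> nat then c else d)).

Definition sigma (k : 'I_4) : 'M[R]_2 :=
  match val k with
  | 0 => mx2 1 phi 0 1
  | 1 => mx2 phi phi 1 phi
  | 2 => mx2 phi 1 phi phi
  | _ => mx2 1 0 phi 1
  end.

Inductive inGamma : 'M[R]_2 -> Prop :=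
  | Gamma_one : inGamma 1%:M
  | Gamma_mul k g : inGamma g -> inGamma (sigma k *m g)
  | Gamma_mulV k g : inGamma g -> inGamma (invmx (sigma k) *m g).

Definition e1 : 'cV[R]_2 := \col_(i < 2) (if i == 0 :> nat then 1 else 0).

Definition inS (v : 'cV[R]_2) : Prop := exists2 g, inGamma g & v = g *m e1.

Definition enorm (v : 'cV[R]_2) : R :=
  Num.sqrt (v 0 0 ^+ 2 + v 1 0 ^+ 2).

End Defs.

(* Main.v *)
Require Import Defs.
From HB Require Import structures.
From mathcomp Require Import all_boot all_order all_algebra.
From mathcomp Require Import reals.
From mathcomp Require Import ring lra zify.
Import Order.TTheory GRing.Theory Num.Theory.
Local Open Scope ring_scope.
Set Implicit Arguments. Unset Strict Implicit.
Section S.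
Variable R : realType.
Definition vec (x y : R) : 'cV[R]_2 := \col_(i < 2) (if i == 0 :> nat then x else y).

Lemma mx2_vec a b c d x y : mx2 a b c d *m vec x y = vec (a*x + b*y) (c*x + d*y).
Proof.
apply/matrixP => i j; rewrite !mxE big_ord_recr big_ord_recl big_ord0 /= !mxE.
by case: i => [[|[|i]] Hi] //=; rewrite addr0.
Qed.

Lemma vecE (v : 'cV[R]_2) : v = vec (v 0 0) (v 1 0).
Proof.
apply/matrixP => i j; rewrite !mxE ord1.
by case: i => [[|[|i]] Hi] //=; congr (v _ _); apply/val_inj.
Qed.

Lemma vec_sub x y x' y' : vec x y - vec x' y' = vec (x - x') (y - y').
Proof. by apply/matrixP => i j; rewrite !mxE; case: ifP. Qed.

Lemma enorm_vec x y : enorm (vec x y) = Num.sqrt (x^+2 + y^+2).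
Proof. by rewrite /enorm !mxE. Qed.

Lemma enorm_le x y : enorm (vec x y) <= `|x| + `|y|.
Proof.
rewrite enorm_vec -[X in _ <= X]ger0_norm ?addr_ge0 // -sqrtr_sqr.
apply: ler_wsqrtr. rewrite -[x^+2]real_normK ?num_real // -[y^+2]real_normK ?num_real //.
have h1 := normr_ge0 x; have h2 := normr_ge0 y. nra.
Qed.

Lemma inS_e1 : inS (vec 1 0).
Proof. exists 1%:M; [exact: Gamma_one | by rewrite mul1mx]. Qed.

Lemma inS_sigma k v : inS v -> inS (sigma R k *m v).
Proof. by case=> g hg ->; exists (sigma R k *m g); [exact: Gamma_mul | rewrite mulmxA]. Qed.

Lemma inS_s0 (m : nat) x y : inS (vec x y) -> inS (vec (x + m%:R * phi R * y) y).
Proof.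
elim: m => [|m IH] h; first by rewrite mul0r mul0r addr0.
have := @inS_sigma (@Ordinal 4 0 isT) _ (IH h).
rewrite /sigma /= mx2_vec; congr inS; congr vec; rewrite ?mulr1 ?mul0r ?mul1r ?add0r ?addr0 //.
rewrite -natr1; ring.
Qed.

Lemma inS_s3 (m : nat) x y : inS (vec x y) -> inS (vec x (y + m%:R * phi R * x)).
Proof.
elim: m => [|m IH] h; first by rewrite mul0r mul0r addr0.
have := @inS_sigma (@Ordinal 4 3 isT) _ (IH h).
rewrite /sigma /= mx2_vec; congr inS; congr vec; rewrite ?mulr1 ?mul0r ?mul1r ?addr0 //.
rewrite -natr1; ring.
Qed.
End S.

Section S2.
Variable R : realType.
Variable be : R.
Hypothesis hb : be ^+ 2 = 1 - be.
Hypothesis hb1 : 1 < 2 * be.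
Hypothesis hb2 : be < 1.

Lemma pow_small N : be ^+ (2 * N) * N.+1%:R <= 1.
Proof.
have hb' := hb; have hb1' := hb1; have hb2' := hb2.
have hb0 : 0 < be by lra.
elim: N => [|N IH]; first by rewrite muln0 expr0 mul1r.
have -> : (2 * N.+1 = 2 * N + 2)%N by lia.
rewrite exprD hb -natr1.
have h0 : 0 <= be ^+ (2 * N) by rewrite exprn_ge0 // ltW.
have h1 : 0 <= N%:R :> R by [].
nra.
Qed.

Lemma exN (eps : R) : 0 < eps -> exists N, be ^+ (2 * N + 1) <= eps.
Proof.
have hb' := hb; have hb1' := hb1; have hb2' := hb2.
move=> he.
have hi : 0 < eps^-1 by rewrite invr_gt0.
have := archi_boundP (ltW hi); set N := Num.bound _ => hN.
exists N.
have h := pow_small N.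
have h0 : 0 <= be ^+ (2 * N) by rewrite exprn_ge0 // ltW; lra.
rewrite exprD expr1.
have h2 : 1 <= eps * N%:R by rewrite -(ler_pM2l hi) mulrA mulVf ?mul1r ?mulr1; [exact: ltW | exact: lt0r_neq0].
rewrite -natr1 in h.
nra.
Qed.

Lemma exj (eps : R) : 0 < eps -> eps <= 1 -> exists j, eps * be ^+ 2 <= be ^+ (2 * j + 1) /\ be ^+ (2 * j + 1) <= eps.
Proof.
have hb' := hb; have hb1' := hb1; have hb2' := hb2.
move=> he he1; have [N hN] := exN he.
elim: N hN => [|N IH] hN.
  by exists 0%N; split => //; rewrite muln0 add0n expr1 hb; nra.
case: (lerP (be ^+ (2 * N + 1)) eps) => h; first exact: IH.
exists N.+1; split => //.
have -> : (2 * N.+1 + 1 = (2 * N + 1) + 2)%N by lia.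
rewrite exprD; have : 0 < be ^+ 2 by rewrite exprn_gt0 //; lra.
nra.
Qed.
Lemma fibpair j : exists a b : nat,
  b%:R * be - a%:R = be ^+ (2 * j + 1) /\ b%:R ^+ 2 - a%:R * b%:R - a%:R ^+ 2 = 1 :> R.
Proof.
elim: j => [|j [a [b [h1 h2]]]]; first by exists 0%N, 1%N; split; [rewrite expr1|]; ring.
exists (a + b)%N, (a + b + b)%N; rewrite !natrD; split.
  have -> : (2 * j.+1 + 1 = (2 * j + 1) + 2)%N by rewrite mulnS; lia.
  rewrite exprD -h1; have e1 := congr1 (fun t => b%:R * t) hb; have e2 := congr1 (fun t => a%:R * t) hb; have e3 := congr1 (fun t => b%:R * be * t) hb; simpl in *; nra.
nra.
Qed.
End S2.

Unset Implicit Arguments. Set Strict Implicit.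

Theorem proposition1p2 (R : realType) :
  exists2 C : R, 0 < C &
  forall eps : R, 0 < eps -> eps <= 1 ->
    exists r : R, r <= C / eps ^+ 2 /\
    exists s1 s2 : 'cV[R]_2,
      [/\ inS s1, inS s2 & s1 <> s2] /\
      [/\ enorm (s1 - s2) <= eps, enorm s1 <= r & enorm s2 <= r].
Proof.
exists 2000; first by [].
move=> eps he he1.
set s := Num.sqrt (5 : R).
have hs0 : 0 <= s by exact: sqrtr_ge0.
have hs2 : s ^+ 2 = 5 by rewrite sqr_sqrtr.
have hphi2 : 2 * phi R = 1 + s by rewrite /phi mulrC divfK // pnatr_eq0.
set be := phi R - 1.
have hphi : phi R = 1 + be by rewrite /be; ring.
have hb : be ^+ 2 = 1 - be by rewrite /be; nra.
have hb1 : 1 < 2 * be by rewrite /be; nra.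
have hb2 : be < 1 by rewrite /be; nra.
have [j [hj1 hj2]] := exj hb hb1 hb2 he he1.
have [a [b [hB hC]]] := fibpair hb hb1 hb2 j.
set B := be ^+ (2 * j + 1) in hj1 hj2 hB.
set m := (3 * a + 5 * b)%N; set m' := (2 * a + 3 * b)%N; set n := (2 * a + b)%N.
set x1 := phi R + m%:R * phi R * 1; set y1 := 1 + n%:R * phi R * x1.
set x2 := phi R + m'%:R * phi R * phi R; set y2 := phi R + n%:R * phi R * x2.
have hs1 : inS (vec x1 y1).
  apply: inS_s3; apply: inS_s0.
  have := inS_sigma (@Ordinal 4 1 isT) (inS_e1 R).
  by rewrite /sigma /= mx2_vec !mulr1 !mulr0 !addr0.
have hs2' : inS (vec x2 y2).
  apply: inS_s3; apply: inS_s0.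
  have := inS_sigma (@Ordinal 4 2 isT) (inS_e1 R).
  by rewrite /sigma /= mx2_vec !mulr1 !mulr0 !addr0.
have hbe0 : 0 < be by lra.
have hB0 : 0 < B by rewrite exprn_gt0.
set A := a%:R : R; set Bb := b%:R : R.
have hA0 : 0 <= A by rewrite /A ler0n.
have hBb0 : 0 <= Bb by rewrite /Bb ler0n.
have hm : m%:R = 3 * A + 5 * Bb :> R by rewrite /m natrD !natrM.
have hm' : m'%:R = 2 * A + 3 * Bb :> R by rewrite /m' natrD !natrM.
have hn : n%:R = 2 * A + Bb :> R by rewrite /n natrD !natrM.
have e1 := congr1 (fun t => A * t) hb; have e2 := congr1 (fun t => Bb * t) hb.
have e3 := congr1 (fun t => Bb * be * t) hb; have e4 := congr1 (fun t => Bb * Bb * t) hb.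
simpl in e1, e2, e3, e4.
have hd1 : x1 - x2 = be ^+ 2 * B.
  rewrite /x1 /x2 hm hm' hphi -hB; nra.
have hpb : (1 + be) * be = 1 by nra.
have hnB : (2 * A + Bb) * B + B ^+ 2 = 1.
  rewrite -hB; nra.
have hd2 : y1 - y2 = - (be * B ^+ 2).
  have -> : y1 - y2 = 1 - phi R + n%:R * phi R * (x1 - x2) by rewrite /y1 /y2; ring.
  rewrite hd1 hn hphi.
  have -> : (2 * A + Bb) * (1 + be) * (be ^+ 2 * B) = be * ((2 * A + Bb) * B).
    have h : (1 + be) * be ^+ 2 = be by rewrite expr2 mulrA hpb mul1r.
    by rewrite -[in RHS]h; ring.
  nra.
have hd1p : 0 < x1 - x2 by rewrite hd1; apply: mulr_gt0 => //; rewrite exprn_gt0.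
have hb3 : 4 * be < 3 by rewrite /be; nra.
have hx1 : x1 = (1 + be) * (1 + (3 * A + 5 * Bb)) by rewrite /x1 hm hphi; ring.
have hx2 : x2 = (1 + be) + (2 * A + 3 * Bb) * (2 + be).
  rewrite /x2 hm' hphi; have hbb : be * be = 1 - be by rewrite -expr2.
  have h : (1 + be) * (1 + be) = 2 + be by lra.
  by rewrite -h; ring.
have hy1 : y1 = 1 + (2 * A + Bb) * (1 + be) * x1 by rewrite /y1 hn hphi.
have hy2 : y2 = (1 + be) + (2 * A + Bb) * (1 + be) * x2 by rewrite /y2 hn hphi.
have hx10 : 0 <= x1 by rewrite hx1; apply: mulr_ge0; lra.
have hx20 : 0 <= x2 by rewrite hx2; apply: addr_ge0; [lra | apply: mulr_ge0; lra].
have hN0' : 0 <= (2 * A + Bb) * (1 + be) by apply: mulr_ge0; lra.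
have hy10 : 0 <= y1 by rewrite hy1; apply: addr_ge0; [lra | exact: mulr_ge0].
have hy20 : 0 <= y2 by rewrite hy2; apply: addr_ge0; [lra | exact: mulr_ge0].
have hcas : (Bb * (1 + be) + A) * B = 1.
  rewrite -hB.
  have -> : (Bb * (1 + be) + A) * (Bb * be - A) = (Bb ^+ 2 - A * Bb - A ^+ 2) + Bb ^+ 2 * (be ^+ 2 + be - 1) by ring.
  by rewrite hC hb; ring.
have hu1 : (A + Bb) * B <= 1.
  have : 0 <= Bb * be * B by apply: mulr_ge0; [apply: mulr_ge0|]; lra.
  lra.
have hu : (A + Bb) * eps <= 4.
  have h1 : (A + Bb) * (eps * be ^+ 2) <= (A + Bb) * B by apply: ler_wpM2l => //; lra.
  have h2 : 0 <= (A + Bb) * eps * (3 - 4 * be) by apply: mulr_ge0; [apply: mulr_ge0|]; lra.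
  have h3 : (A + Bb) * (eps * be ^+ 2) = (A + Bb) * eps * (1 - be) by rewrite -hb; ring.
  lra.
have hX1 : x1 * eps <= 42.
  have h1 : 0 <= (1 - be) * (1 + (3 * A + 5 * Bb)) by apply: mulr_ge0; lra.
  have h2 : x1 <= 2 + 10 * (A + Bb) by rewrite hx1; lra.
  have h3 : x1 * eps <= (2 + 10 * (A + Bb)) * eps by apply: ler_wpM2r => //; lra.
  lra.
have hX2 : x2 * eps <= 38.
  have h1 : 0 <= (1 - be) * (2 * A + 3 * Bb) by apply: mulr_ge0; lra.
  have h2 : x2 <= 2 + 9 * (A + Bb) by rewrite hx2; lra.
  have h3 : x2 * eps <= (2 + 9 * (A + Bb)) * eps by apply: ler_wpM2r => //; lra.
  lra.
have hN : (2 * A + Bb) * (1 + be) * eps <= 16.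
  have h1 : 0 <= (2 * A + Bb) * (1 - be) by apply: mulr_ge0; lra.
  have h2 : (2 * A + Bb) * (1 + be) <= 4 * (A + Bb) by lra.
  have h3 : (2 * A + Bb) * (1 + be) * eps <= 4 * (A + Bb) * eps by apply: ler_wpM2r => //; lra.
  lra.
have hN0 : 0 <= (2 * A + Bb) * (1 + be) * eps by apply: mulr_ge0 => //; lra.
have he2 : eps ^+ 2 <= eps by rewrite expr2 ger_pMr.
have he20 : 0 <= eps ^+ 2 by rewrite exprn_ge0 // ltW.
have hY1 : y1 * eps ^+ 2 <= 1 + 16 * 42.
  have h1 : ((2 * A + Bb) * (1 + be) * eps) * (x1 * eps) <= 16 * 42.
    by apply: ler_pM => //; apply: mulr_ge0 => //; lra.
  have h2 : y1 * eps ^+ 2 = eps ^+ 2 + ((2 * A + Bb) * (1 + be) * eps) * (x1 * eps) by rewrite hy1; ring.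
  lra.
have hY2 : y2 * eps ^+ 2 <= 2 + 16 * 38.
  have h1 : ((2 * A + Bb) * (1 + be) * eps) * (x2 * eps) <= 16 * 38.
    by apply: ler_pM => //; apply: mulr_ge0 => //; lra.
  have h2 : y2 * eps ^+ 2 = (1 + be) * eps ^+ 2 + ((2 * A + Bb) * (1 + be) * eps) * (x2 * eps) by rewrite hy2; ring.
  have h3 : (1 + be) * eps ^+ 2 <= 2 * eps ^+ 2 by apply: ler_wpM2r => //; lra.
  lra.
have hn1 : enorm (vec x1 y1) <= x1 + y1.
  by apply: le_trans (enorm_le _ _) _; rewrite !ger0_norm.
have hn2 : enorm (vec x2 y2) <= x2 + y2.
  by apply: le_trans (enorm_le _ _) _; rewrite !ger0_norm.
have hne1 : 0 <= enorm (vec x1 y1) by exact: sqrtr_ge0.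
have hne2 : 0 <= enorm (vec x2 y2) by exact: sqrtr_ge0.
exists (enorm (vec x1 y1) + enorm (vec x2 y2)); split.
  rewrite ler_pdivlMr ?exprn_gt0 //.
  have h1 : x1 * eps ^+ 2 <= x1 * eps by apply: ler_wpM2l.
  have h2 : x2 * eps ^+ 2 <= x2 * eps by apply: ler_wpM2l.
  have h3 : (enorm (vec x1 y1) + enorm (vec x2 y2)) * eps ^+ 2 <= (x1 + y1 + (x2 + y2)) * eps ^+ 2.
    by apply: ler_wpM2r => //; lra.
  lra.
exists (vec x1 y1), (vec x2 y2); split.
  split => // /(congr1 (fun v : 'cV[R]_2 => v 0 0)); rewrite !mxE /= => h.
  by move: hd1p; rewrite h subrr ltxx.
split; [|lra|lra].
rewrite vec_sub; apply: le_trans (enorm_le _ _) _.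
rewrite hd1 hd2 normrN !ger0_norm; first last.
- by rewrite mulr_ge0 // ?exprn_ge0 // ltW.
- by rewrite mulr_ge0 // ?exprn_ge0 // ltW.
have h1 : be * B ^+ 2 <= be * B by apply: ler_wpM2l; [lra | rewrite expr2 ger_pMr //; lra].
have h2 : be ^+ 2 * B = (1 - be) * B by rewrite hb.
lra.
Qed.
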